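(* For all integers $n,d$ with $n\ge h$ and $0\le d\le\rho(m)-1$: \[ \sum_{i=0}^{\rho(m)-1}\mu_i\;\le\;\sum_{f=1}^h y(n-f)\;\le\;\rho(m)+\sum_{i=0}^{\rho(m)-1}\mu_i, \] and \[ \sum_{i=d+1}^{\rho(m)-1}\mu_i\;\le\;\sum_{f=1}^h w(n-f,d)\;\le\;\rho(m)-d-1+\sum_{i=0}^{\rho(m)-1}\mu_i . \]
   Context: For $u\in\mathbb{R}$ let $\mathbf 1[u]=1$ if $u\ge 0$ and $\mathbf 1[u]=0$ if $u<0$. Let $m$ be a positive integer and let $\rho(m)$ denote the number of primes $p$ with $2m<p<3m$; assume $\rho(m)\ge 2$. List these primes as $p_0>p_1>\dots>p_{\rho(m)-1}$ and put $\alpha_i=3m-p_i$. Let $k=(6m-1)\rho(m)$, $\mu_i=\lfloor k/p_i\rfloor$, $\beta_i=k-p_i\mu_i$. Define weights $\bar a_j$, $1\le j\le k$: if $\rho(m)$ is even, $\bar a_j=2$ if $j=\ell p_i$ for some $i$ and some $\ell$ with $1\le \ell\le 3\rho(m)/2$, $\bar a_j=-2$ if $j=\ell p_i$ with $3\rho(m)/2<\ell\le 2\rho(m)$, and $\bar a_j=0$ otherwise; if $\rho(m)$ is odd, $\bar a_j=2$ if $j=\ell p_i$ with $1\le\ell\le (3\rho(m)-1)/2$, $\bar a_j=-2$ if $j=\ell p_i$ with $(3\rho(m)+1)/2\le \ell\le 2\rho(m)-2$, $\bar a_j=-1$ if $j=\ell p_i$ with $\ell\in\{2\rho(m)-1,2\rho(m)\}$,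 and $\bar a_j=0$ otherwise (well defined since the sets $\{\ell p_i:1\le\ell\le2\rho(m)\}$ are pairwise disjoint). Let $\bar\theta=2\rho(m)$. For each $i$ define $x^{\alpha_i}(t)$ for $0\le t\le k-1$ by $x^{\alpha_i}(t)=1$ if $t=\beta_i+\ell p_i$ for some $0\le \ell\le\mu_i-1$ and $x^{\alpha_i}(t)=0$ otherwise, and for $t\ge k$ by $x^{\alpha_i}(t)=\mathbf 1\big[\sum_{j=1}^k \bar a_j x^{\alpha_i}(t-j)-\bar\theta\big]$. Let $h=\rho(m)k$. For $1\le f\le h$ let $b_f=\bar a_j$ if $f=\rho(m)j$ with $1\le j\le k$, and $b_f=0$ otherwise. Define $(y(n))_{n\ge0}$ by $y(\rho(m)j+i)=x^{\alpha_i}(1+j)$ for $0\le j\le k-1$, $0\le i\le\rho(m)-1$, and $y(n)=\mathbf 1\big[\sum_{f=1}^h b_f y(n-f)-\bar\theta\big]$ for $n\ge h$. Let $L_1(d)=\rho(m)\cdot\mathrm{lcm}(p_0,\dots,p_d)$ for $0\le d\le\rho(m)-1$. For $0\le d\le\rho(m)-1$ define $(w(n,d))_{n\ge0}$ by: for $0\le i\le d$, $w(\rho(m)j+i,d)=x^{\alpha_i}(1+j)$ for $0\le j\le k-2$ and $w(\rho(m)(k-1)+i,d)=1-x^{\alpha_i}(k)$; for $d+1\le i\le\rho(m)-1$ and $0\le j\le k-1$, $w(\rho(m)j+i,d)=y(\rho(m)j+i+L_1(d))$; and $w(n,d)=\mathbf 1\big[\sum_{f=1}^h b_f w(n-f,d)-\bar\theta\big]$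 for $n\ge h$. *)

(* Defs.v *)
From HB Require Import structures.
From mathcomp Require Import all_boot all_order all_algebra.
Set Implicit Arguments. Unset Strict Implicit. Unset Printing Implicit Defensive.
Import Order.TTheory GRing.Theory Num.Theory.
Local Open Scope ring_scope.
Local Open Scope nat_scope.

(* Primes p with 2m < p < 3m, listed in decreasing order p_0 > p_1 > ... *)
Definition primes_between (m : nat) : seq nat :=
  rev [seq p <- iota (2 * m).+1 (m.-1) | prime p].

Definition rho (m : nat) : nat := size (primes_between m).

Definition pr (m i : nat) : nat := nth 0 (primes_between m) i.

Definition kk (m : nat) : nat := (6 * m - 1) * rho m.
Definition mu (m i : nat) : nat := kk m %/ pr m i.
Definition beta (m i : nat) : nat := kk m %% pr m i.

(* weight attached to multiple l * p_i, 1 <= l <= 2 rho *)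
Definition wl (m l : nat) : int :=
  let r := rho m in
  if ~~ odd r then
    (if l <= (3 * r) %/ 2 then Posz 2 else (- Posz 2)%R)
  else
    (if l <= (3 * r - 1) %/ 2 then Posz 2
     else if l <= 2 * r - 2 then (- Posz 2)%R else (- Posz 1)%R).

Definition abar (m j : nat) : int :=
  let good := [seq i <- iota 0 (rho m) |
                 (pr m i %| j) && (0 < j %/ pr m i <= 2 * rho m)] in
  match good with
  | i :: _ => wl m (j %/ pr m i)
  | [::] => Posz 0
  end.

Definition theta (m : nat) : int := Posz (2 * rho m).

(* Generic threshold recursion with window K:
   s(t) = init t for t < K, and
   s(t) = 1[ sum_{j=1}^K a_j s(t-j) - th ] for t >= K. Values are 0/1 nats. *)
Fixpoint thr_build (K : nat) (a : nat -> int) (th : int) (init : nat -> nat)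
    (n : nat) : seq nat :=
  match n with
  | 0 => [::]
  | n'.+1 =>
      let s := thr_build K a th init n' in
      rcons s (if n' < K then init n'
               else nat_of_bool (th <= \sum_(1 <= j < K.+1) a j * Posz (nth 0 s (n' - j)))%R)
  end.

Definition thr_seq (K : nat) (a : nat -> int) (th : int) (init : nat -> nat)
    (t : nat) : nat :=
  nth 0 (thr_build K a th init t.+1) t.

Definition x_init (m i t : nat) : nat :=
  nat_of_bool [&& beta m i <= t, pr m i %| t - beta m i
                & (t - beta m i) %/ pr m i < mu m i].

Definition x (m i : nat) : nat -> nat :=
  thr_seq (kk m) (abar m) (theta m) (x_init m i).

Definition hh (m : nat) : nat := rho m * kk m.

Definition bw (m f : nat) : int :=
  if (rho m %| f) && (0 < f %/ rho m <= kk m) then abar m (f %/ rho m) else Posz 0.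

Definition y (m : nat) : nat -> nat :=
  thr_seq (hh m) (bw m) (theta m)
    (fun n => x m (n %% rho m) (1 + n %/ rho m)).

Definition L1 (m d : nat) : nat := rho m * \big[lcmn/1]_(i < d.+1) pr m i.

Definition w_init (m d n : nat) : nat :=
  let i := n %% rho m in
  let j := n %/ rho m in
  if i <= d then
    (if j <= kk m - 2 then x m i (1 + j) else 1 - x m i (kk m))
  else y m (n + L1 m d).

Definition w (m d : nat) : nat -> nat :=
  thr_seq (hh m) (bw m) (theta m) (w_init m d).

(* Main.v *)
Require Import Defs.
From HB Require Import structures.
From mathcomp Require Import all_boot all_order all_algebra zify.
Set Implicit Arguments. Unset Strict Implicit. Unset Printing Implicit Defensive.
Import Order.TTheory GRing.Theory Num.Theory.

Lemma uniq_pb m : uniq (primes_between m).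
Proof. by rewrite /primes_between rev_uniq filter_uniq // iota_uniq. Qed.

Lemma mem_pb m p : p \in primes_between m -> [/\ prime p, 2 * m < p & p < 3 * m].
Proof.
rewrite /primes_between mem_rev mem_filter mem_iota => /andP[pp /andP[h1 h2]].
split => //; lia.
Qed.

Lemma rho_lt m : 0 < m -> rho m < m.
Proof.
move=> hm; rewrite /rho /primes_between size_rev size_filter.
apply: leq_ltn_trans (count_size _ _) _; rewrite size_iota; lia.
Qed.

Lemma pr_prop m i : i < rho m -> [/\ prime (pr m i), 2 * m < pr m i & pr m i < 3 * m].
Proof. by move=> hi; apply: mem_pb; apply: mem_nth. Qed.

Lemma pr_inj m i j : i < rho m -> j < rho m -> pr m i = pr m j -> i = j.
Proof.
move=> hi hj /eqP; rewrite /pr nth_uniq //; [by move/eqP| exact: uniq_pb].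
Qed.

Lemma pr_gt0 m i : i < rho m -> 0 < pr m i.
Proof. by case/pr_prop => /prime_gt0. Qed.

Lemma beta_lt m i : i < rho m -> beta m i < pr m i.
Proof. by move=> hi; rewrite /beta ltn_pmod // pr_gt0. Qed.

Lemma kk_eq m i : kk m = mu m i * pr m i + beta m i.
Proof. exact: divn_eq. Qed.

Definition X m i s : nat := (s %% pr m i == beta m i).

Lemma mod_dvd a b p : (a + b) %% p = a %% p -> p %| b.
Proof.
move=> h. have : (a + b == a + 0 %[mod p]) by rewrite addn0 h.
by rewrite eqn_modDl mod0n.
Qed.

Lemma two_rho_lt m i : 0 < m -> i < rho m -> 2 * rho m < pr m i.
Proof. move=> hm hi; have := rho_lt hm; case: (pr_prop hi) => _ h _; lia. Qed.

Lemma lp_le m i l : 0 < m -> i < rho m -> l <= 2 * rho m -> l * pr m i <= kk m.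
Proof.
move=> hm hi hl; case: (pr_prop hi) => _ _ h; rewrite /kk.
have h' : pr m i <= 3 * m - 1 by lia.
apply: (leq_trans (leq_mul hl h')). 
have: 0 < rho m by lia. nia.
Qed.

Lemma no_coll m i i' l : 0 < m -> i < rho m -> i' < rho m -> i != i' ->
  0 < l <= 2 * rho m -> ~~ (pr m i %| l * pr m i').
Proof.
move=> hm hi hi' nii hl; case: (pr_prop hi) => pp _ _; case: (pr_prop hi') => pp' _ _.
rewrite Euclid_dvdM // (dvdn_prime2 pp pp') negb_or; apply/andP; split.
  apply/negP => /(dvdn_leq) h. have := two_rho_lt hm hi. lia.
by apply/negP => /eqP /(pr_inj hi hi') /eqP; rewrite (negbTE nii).
Qed.

Local Open Scope ring_scope.

Lemma sum_if_eq (a b i0 : nat) (F : nat -> int) : (a <= i0 < b)%N ->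
  \sum_(a <= i < b) (if i == i0 then F i else 0) = F i0.
Proof.
move=> /andP[h1 h2]; rewrite (@big_cat_nat _ _ _ i0 a b _ _ h1 (ltnW h2)) /=.
rewrite [X in (_ + X)]big_ltn // eqxx.
rewrite big_nat_cond big1; last by move=> i /andP[/andP[_ hi] _]; rewrite ltn_eqF.
rewrite add0r big_nat_cond big1 ?addr0 //.
by move=> i /andP[/andP[hi _] _]; rewrite gtn_eqF.
Qed.

Definition G m j i : bool := ((pr m i %| j) && (0 < j %/ pr m i <= 2 * rho m))%N.

Lemma G_uniq m j i1 i2 : (0 < m)%N -> (i1 < rho m)%N -> (i2 < rho m)%N ->
  G m j i1 -> G m j i2 -> i1 = i2.
Proof.
move=> hm h1 h2 /andP[d1 r1] /andP[d2 r2]; apply/eqP; apply/negPn/negP => ne.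
by have := no_coll hm h1 h2 ne r2; rewrite divnK // d1.
Qed.

Lemma inner_sum m j i : (0 < m)%N -> (i < rho m)%N ->
  \sum_(1 <= l < (2 * rho m).+1) (if j == (l * pr m i)%N then wl m l else 0)
  = if G m j i then wl m (j %/ pr m i) else 0.
Proof.
move=> hm hi; have p0 := pr_gt0 hi.
case: ifP => hG.
  case/andP: hG => hd hr.
  rewrite (eq_bigr (fun l => if l == (j %/ pr m i)%N then wl m l else 0)).
    by rewrite sum_if_eq //; lia.
  move=> l _; congr (if _ then _ else _).
  by rewrite -{1}(divnK hd) eqn_pmul2r // eq_sym.
rewrite big_nat_cond big1 // => l /andP[/andP[l1 l2] _].
case: eqP => // hj; move: hG; rewrite /G hj dvdn_mull // mulnK //; lia.
Qed.

Lemma abar_sum m j : (0 < m)%N -> abar m j =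
  \sum_(i < rho m) \sum_(1 <= l < (2 * rho m).+1)
     (if j == (l * pr m i)%N then wl m l else 0).
Proof.
move=> hm.
rewrite (eq_bigr (fun i : 'I_(rho m) => if G m j i then wl m (j %/ pr m i) else 0));
  last by move=> i _; rewrite inner_sum.
rewrite /abar.
have memg : forall i, (i \in [seq i <- iota 0 (rho m) | ((pr m i %| j) && (0 < j %/ pr m i <= 2 * rho m))%N])
   = (i < rho m)%N && G m j i.
  by move=> i; rewrite mem_filter mem_iota /G add0n andbC.
case E: [seq i <- iota 0 (rho m) | _] memg => [|i0 s] memg.
  rewrite big1 // => i _; case: ifP => // hG.
  by have := memg i; rewrite in_nil ltn_ord hG.
have := memg i0; rewrite mem_head => /esym/andP[hi0 hG0].
rewrite (bigD1 (Ordinal hi0)) //= hG0 big1 ?addr0 // => i /eqP ne.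
case: ifP => // hG; exfalso; apply: ne; apply: val_inj => /=.
exact: (G_uniq hm (ltn_ord i) hi0 hG hG0).
Qed.

Lemma RE m (g : nat -> int) : (0 < m)%N ->
  \sum_(1 <= j < (kk m).+1) abar m j * g j =
  \sum_(i < rho m) \sum_(1 <= l < (2 * rho m).+1) wl m l * g (l * pr m i)%N.
Proof.
move=> hm.
rewrite (eq_bigr (fun j => \sum_(i < rho m) \sum_(1 <= l < (2 * rho m).+1)
     (if j == (l * pr m i)%N then wl m l * g j else 0))); last first.
  move=> j _; rewrite abar_sum // big_distrl; apply: eq_bigr => i _.
  rewrite big_distrl; apply: eq_bigr => l _; by case: ifP => _; rewrite /= ?mul0r.
rewrite exchange_big; apply: eq_bigr => i _.
rewrite exchange_big; apply: eq_big_nat => l /andP[l1 l2].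
rewrite (eq_bigr (fun j => if j == (l * pr m i)%N then wl m l * g j else 0)) //.
rewrite sum_if_eq //.
have := lp_le hm (ltn_ord i) (_ : (l <= 2 * rho m)%N); have := pr_gt0 (ltn_ord i).
move=> h1 h2; have h3 := h2 ltac:(lia). apply/andP; split; last by lia.
by rewrite muln_gt0 l1.
Qed.

Lemma size_thr K a th init n : size (thr_build K a th init n) = n.
Proof. by elim: n => //= n IH; rewrite size_rcons IH. Qed.

Lemma thr_prefix K a th init n t : (t < n)%N ->
  nth 0%N (thr_build K a th init n) t = thr_seq K a th init t.
Proof.
elim: n => // n IH; rewrite ltnS leq_eqVlt => /orP[/eqP ->|ht] //.
by rewrite /= nth_rcons size_thr ht IH.
Qed.

Lemma thr_eq K a th init t : thr_seq K a th init t =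
  if (t < K)%N then init t else
  nat_of_bool (th <= \sum_(1 <= j < K.+1) a j * Posz (thr_seq K a th init (t - j))).
Proof.
rewrite /thr_seq /= nth_rcons size_thr ltnn eqxx.
case: ifP => // hK; congr (nat_of_bool (_ <= _)); apply: eq_big_nat => j /andP[j1 j2].
rewrite thr_prefix //; lia.
Qed.

Definition Pc (r c : nat) (od : bool) : int :=
 if ~~ od then (if (c <= (3 * r) %/ 2)%N then 2 * c%:Z else 6 * r%:Z - 2 * c%:Z)
 else (if (c <= (3 * r - 1) %/ 2)%N then 2 * c%:Z
       else if (c <= 2 * r - 2)%N then 2 * (3 * r%:Z - 1) - 2 * c%:Z
       else if (c == 2 * r - 1)%N then 2 * r%:Z + 1 else 2 * r%:Z).

Lemma P_closed m c : (c <= 2 * rho m)%N -> (2 <= rho m)%N ->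
  \sum_(1 <= l < c.+1) wl m l = Pc (rho m) c (odd (rho m)).
Proof.
move=> + hr; have hrr : rho m = (2 * (rho m %/ 2) + odd (rho m))%N.
  by rewrite {1}(divn_eq (rho m) 2) modn2; lia.
elim: c => [|c IH] hc.
  rewrite big_geq // /Pc; case: (odd (rho m)) hrr => /= hrr;
  repeat (case: ifP => ?); lia.
rewrite big_nat_recr //= IH; last lia.
rewrite /Pc /wl; case: (odd (rho m)) hrr => /= hrr;
repeat (case: ifP => ?); lia.
Qed.

Lemma wl_total m : (2 <= rho m)%N -> \sum_(1 <= l < (2 * rho m).+1) wl m l = Posz (2 * rho m).
Proof.
move=> hr; rewrite P_closed // /Pc.
have hrr : rho m = (2 * (rho m %/ 2) + odd (rho m))%N.
  by rewrite {1}(divn_eq (rho m) 2) modn2; lia.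
case: (odd (rho m)) hrr => /= hrr; repeat (case: ifP => ?); lia.
Qed.

Lemma wl_prefix m c : (2 <= rho m)%N -> (1 <= c <= 2 * rho m)%N ->
  1 <= \sum_(1 <= l < c.+1) wl m l.
Proof.
move=> hr hc; rewrite P_closed //; last lia. rewrite /Pc.
have hrr : rho m = (2 * (rho m %/ 2) + odd (rho m))%N.
  by rewrite {1}(divn_eq (rho m) 2) modn2; lia.
case: (odd (rho m)) hrr => /= hrr; repeat (case: ifP => ?); lia.
Qed.

Lemma wl_suffix m c : (2 <= rho m)%N -> (1 <= c)%N ->
  \sum_(1 <= l < (2 * rho m).+1) (if (c < l)%N then wl m l else 0) < Posz (2 * rho m).
Proof.
move=> hr hc; case: (leqP (2 * rho m) c) => hc2.
  rewrite big_nat_cond big1 //; first lia.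
  by move=> l /andP[/andP[_ hl] _]; rewrite ltnNge (leq_trans _ hc2).
rewrite (@big_cat_nat _ _ _ c.+1) //=; last lia.
rewrite big_nat_cond big1 ?add0r; last first.
  by move=> l /andP[/andP[_ hl] _]; rewrite ltnNge -ltnS hl.
rewrite (eq_big_nat _ _ (F2 := wl m)); last by move=> l /andP[hl _]; rewrite hl.
have := wl_total hr; rewrite (@big_cat_nat _ _ _ c.+1) //=; try lia.
have hp : (1 <= c <= 2 * rho m)%N by lia.
have := wl_prefix hr hp.
set A := \sum_(1 <= l < c.+1) wl m l; set B := \sum_(c.+1 <= l < _) wl m l. lia.
Qed.

Lemma sum_le1 a b (F : nat -> nat) : (forall i, F i <= 1)%N ->
  (forall i j, (a <= i < b)%N -> (a <= j < b)%N -> (0 < F i)%N -> (0 < F j)%N -> i = j) ->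
  \sum_(a <= i < b) Posz (F i) <= 1.
Proof.
elim: b => [|b IH] H1 H2; first by rewrite big_geq.
case: (leqP a b) => hab; last by rewrite big_geq.
rewrite big_nat_recr //=.
case: (posnP (F b)) => hb.
  rewrite hb addr0 IH // => i j hi hj; apply: H2; lia.
rewrite big_nat_cond big1 ?add0r; first by have := H1 b; lia.
move=> i /andP[hi _]; case: (posnP (F i)) => [->//|hi0].
have := H2 i b ltac:(lia) ltac:(lia) hi0 hb; lia.
Qed.

Lemma wl_le2 m l : wl m l <= 2.
Proof. by rewrite /wl; repeat case: ifP. Qed.

Lemma mod_sub t b p : ((b * p <= t) -> (t - b * p) %% p = t %% p)%N.
Proof. by move=> h; rewrite -{2}(subnK h) addnC modnMDl. Qed.

Lemma lp_le_t m i' l t : (0 < m)%N -> (i' < rho m)%N -> (l <= 2 * rho m)%N ->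
  (kk m <= t)%N -> (l * pr m i' <= t)%N.
Proof. move=> hm hi hl ht; exact: leq_trans (lp_le hm hi hl) ht. Qed.

Lemma cross_le2 m i i' t (F : nat -> nat) : (0 < m)%N -> (i < rho m)%N ->
  (i' < rho m)%N -> i != i' -> (kk m <= t)%N ->
  (forall s, F s <= X m i s)%N ->
  \sum_(1 <= l < (2 * rho m).+1) wl m l * Posz (F (t - l * pr m i')%N) <= 2.
Proof.
move=> hm hi hi' ne ht hF.
apply: (@le_trans _ _ (\sum_(1 <= l < (2 * rho m).+1) 2 * Posz (F (t - l * pr m i')%N))).
  apply: ler_sum => l _; apply: ler_wpM2r => //; exact: wl_le2.
rewrite -mulr_sumr; have -> : (2 : int) = 2 * 1 by [].
rewrite -mulrA ler_pM2l // mul1r.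
apply: sum_le1 => [s|l1 l2 hl1 hl2 f1 f2].
  by apply: leq_trans (hF _) _; rewrite /X; case: eqP.
have x1 := leq_trans f1 (hF _); have x2 := leq_trans f2 (hF _).
move: x1 x2; rewrite /X !lt0b => /eqP x1 /eqP x2.
have le1 := lp_le_t (l := l1) hm hi' ltac:(lia) ht.
have le2 := lp_le_t (l := l2) hm hi' ltac:(lia) ht.
have gen : forall u v, (1 <= u < (2 * rho m).+1)%N -> (1 <= v < (2 * rho m).+1)%N ->
   (u < v)%N -> ((t - u * pr m i') %% pr m i)%N = beta m i ->
   ((t - v * pr m i') %% pr m i)%N = beta m i -> False.
  move=> u v hu hv uv eu ev.
  have lu := lp_le_t (l := u) hm hi' ltac:(lia) ht.
  have lv := lp_le_t (l := v) hm hi' ltac:(lia) ht.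
  have e : ((t - v * pr m i') + (v - u) * pr m i' = t - u * pr m i')%N.
    rewrite mulnBl; have huv : (u * pr m i' <= v * pr m i')%N by rewrite leq_mul2r ltnW ?orbT.
    by rewrite addnBA // subnK.
  have hvu : (0 < v - u <= 2 * rho m)%N by move: hu hv uv; clear; lia.
  have := no_coll (l := v - u) hm hi hi' ne hvu.
  move/negP; apply; apply: (@mod_dvd (t - v * pr m i')%N).
  by rewrite e eu ev.
case: (ltngtP l1 l2) => // h.
  by exfalso; exact: (gen l1 l2).
by exfalso; exact: (gen l2 l1).
Qed.

Lemma X_le1 m i s : (X m i s <= 1)%N.
Proof. by rewrite /X; case: eqP. Qed.

Lemma own_X m i l t : (l * pr m i <= t)%N -> X m i (t - l * pr m i)%N = X m i t.
Proof. by move=> h; rewrite /X mod_sub. Qed.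

Lemma bad_total m i t (F : nat -> nat) : (0 < m)%N -> (i < rho m)%N ->
  (kk m <= t)%N -> (forall s, F s <= X m i s)%N -> X m i t = 0%N ->
  \sum_(i' < rho m) \sum_(1 <= l < (2 * rho m).+1) wl m l * Posz (F (t - l * pr m i')%N)
  < Posz (2 * rho m).
Proof.
move=> hm hi ht hF hX.
rewrite (bigD1 (Ordinal hi)) //= big_nat_cond big1 ?add0r; last first.
  move=> l /andP[/andP[_ hl] _]; have := hF (t - l * pr m i)%N.
  rewrite own_X ?hX; last by apply: lp_le_t => //; lia.
  by rewrite leqn0 => /eqP ->; rewrite mulr0.
apply: (@le_lt_trans _ _ (\sum_(i' < rho m | i' != Ordinal hi) (2:int))).
  apply: ler_sum => i' ne; apply: (cross_le2 (i := i)) => //.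
  by apply: contra ne => /eqP e; apply/eqP/val_inj => /=; first [done | by rewrite e | by rewrite -e].
rewrite sumr_const cardC1 card_ord.
have : (0 < rho m)%N by lia.
case: (rho m) => // r _ /=. rewrite -mulr_natr; lia.
Qed.

Lemma K1 m i t : (0 < m)%N -> (2 <= rho m)%N -> (i < rho m)%N -> (kk m <= t)%N ->
  nat_of_bool (theta m <= \sum_(1 <= j < (kk m).+1) abar m j * Posz (X m i (t - j)%N))
  = X m i t.
Proof.
move=> hm hr hi ht.
rewrite (RE (fun j => Posz (X m i (t - j)%N)) hm).
case: (boolP (t %% pr m i == beta m i)%N) => hX; last first.
  have hX0 : X m i t = 0%N by rewrite /X (negbTE hX).
  rewrite hX0; apply/eqP; rewrite eqb0 -ltNge.
  by apply: (bad_total (F := X m i) hm hi ht _ hX0) => s.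
have hX1 : X m i t = 1%N by rewrite /X hX.
rewrite hX1 (bigD1 (Ordinal hi)) //=.
rewrite (eq_big_nat _ _ (F2 := wl m)); last first.
  move=> l /andP[_ hl]; rewrite own_X ?hX1 ?mulr1 //; apply: lp_le_t => //; lia.
rewrite wl_total // big1 ?addr0 /theta ?lexx // => i' ne.
rewrite big_nat_cond big1 // => l /andP[/andP[l1 l2] _].
suff hz : X m i (t - l * pr m i')%N = 0%N by rewrite hz ?mulr0.
rewrite /X; case: eqP => // e; exfalso.
have hne : i != i' by apply: contra ne => /eqP e'; apply/eqP/val_inj => /=; first [done | by rewrite e' | by rewrite -e'].
have hl : (0 < l <= 2 * rho m)%N by move: l1 l2; clear; lia.
have := no_coll hm hi (ltn_ord i') hne hl.
move/negP; apply; apply: (@mod_dvd (t - l * pr m i')%N).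
rewrite subnK ?e ?(eqP hX) //; apply: lp_le_t => //; lia.
Qed.

Definition Z m i s : nat := nat_of_bool ((s %% pr m i == beta m i) && (s < kk m))%N.

Lemma Z_le_X m i s : (Z m i s <= X m i s)%N.
Proof. by rewrite /Z /X; case: (s %% pr m i == beta m i)%N; case: (s < kk m)%N. Qed.

Lemma K2 m i t : (0 < m)%N -> (2 <= rho m)%N -> (i < rho m)%N -> (kk m < t)%N ->
  nat_of_bool (theta m <= \sum_(1 <= j < (kk m).+1) abar m j * Posz (Z m i (t - j)%N))
  = 0%N.
Proof.
move=> hm hr hi ht.
rewrite (RE (fun j => Posz (Z m i (t - j)%N)) hm).
apply/eqP; rewrite eqb0 -ltNge.
have ht' : (kk m <= t)%N by apply: ltnW.
case: (boolP (t %% pr m i == beta m i)%N) => hX; last first.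
  apply: (bad_total (F := Z m i) hm hi ht' _) => [s|]; first exact: Z_le_X.
  by rewrite /X (negbTE hX).
have p0 := pr_gt0 hi.
have dv : (pr m i %| t - kk m)%N.
  apply: (@mod_dvd (kk m)); rewrite subnKC ?(eqP hX) //.
set c := ((t - kk m) %/ pr m i)%N.
have tc : (t - kk m = c * pr m i)%N by rewrite divnK.
have c1 : (1 <= c)%N.
  rewrite lt0n; apply/eqP => c0; move: tc; rewrite c0 mul0n; move: ht; clear; lia.
rewrite (bigD1 (Ordinal hi)) //=.
rewrite (eq_big_nat _ _ (F2 := fun l => if (c < l)%N then wl m l else 0)); last first.
  move=> l /andP[l1 l2].
  have hl : (l * pr m i <= t)%N by apply: lp_le_t => //; move: l2; clear; lia.
  rewrite /Z mod_sub // hX /=.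
  have -> : (t - l * pr m i < kk m)%N = (c < l)%N.
    rewrite -[(c < l)%N](ltn_pmul2r p0).
    move: tc hl ht; move: (c * pr m i)%N (l * pr m i)%N => cp lp; clear.
    move=> tc hl ht; apply/idP/idP => h; lia.
  by case: ifP; rewrite ?mulr1 ?mulr0.
rewrite [X in (_ + X)%R]big1 ?addr0 /theta; first exact: wl_suffix.
move=> i' ne.
rewrite big_nat_cond big1 // => l /andP[/andP[l1 l2] _].
suff hz : Z m i (t - l * pr m i')%N = 0%N by rewrite hz ?mulr0.
have hz : X m i (t - l * pr m i')%N = 0%N.
  rewrite /X; case: eqP => // e; exfalso.
  have hne : i != i' by apply: contra ne => /eqP e'; apply/eqP/val_inj => /=; first [done | by rewrite e' | by rewrite -e'].
  have hl : (0 < l <= 2 * rho m)%N by move: l1 l2; clear; lia.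
  have := no_coll hm hi (ltn_ord i') hne hl.
  move/negP; apply; apply: (@mod_dvd (t - l * pr m i')%N).
  rewrite subnK ?e ?(eqP hX) //; apply: lp_le_t => //; move: l2; clear; lia.
by have := Z_le_X m i (t - l * pr m i')%N; rewrite hz leqn0 => /eqP.
Qed.

Local Close Scope ring_scope.

Lemma sumS (f : nat -> nat) T L1 L2 :
  \sum_(0 <= q < L1 + L2) f (T + q) =
  \sum_(0 <= q < L1) f (T + q) + \sum_(0 <= q < L2) f (T + L1 + q).
Proof.
elim: L2 => [|L2 IH]; first by rewrite addn0 [X in _ + X]big_geq // addn0.
by rewrite addnS !big_nat_recr //= ?IH ?addnA //; lia.
Qed.

Lemma sum_le1N a b (F : nat -> nat) : (forall i, F i <= 1) ->
  (forall i j, a <= i < b -> a <= j < b -> 0 < F i -> 0 < F j -> i = j) ->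
  \sum_(a <= i < b) F i <= 1.
Proof.
elim: b => [|b IH] H1 H2; first by rewrite big_geq.
case: (leqP a b) => hab; last by rewrite big_geq.
rewrite big_nat_recr //=.
case: (posnP (F b)) => hb.
  rewrite hb addn0 IH // => i j hi hj; apply: H2; lia.
rewrite big_nat_cond big1 ?add0n; first by have := H1 b; lia.
move=> i /andP[hi _]; case: (posnP (F i)) => [->//|hi0].
have := H2 i b ltac:(lia) ltac:(lia) hi0 hb; lia.
Qed.

Definition Rc p c s : nat := nat_of_bool (s %% p == c).

Lemma win_le1 p c T L : 0 < p -> L <= p -> \sum_(0 <= q < L) Rc p c (T + q) <= 1.
Proof.
move=> p0 hL; apply: sum_le1N => [s|q1 q2 h1 h2]; first by rewrite /Rc; case: eqP.
rewrite /Rc !lt0b => /eqP e1 /eqP e2.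
wlog lt : q1 q2 h1 h2 e1 e2 / q1 <= q2.
  move=> H; case: (leqP q1 q2) => h; first exact: H.
  by apply/esym/H => //; apply: ltnW.
case: (ltngtP q1 q2) lt => // lt _.
have : p %| q2 - q1.
  apply: (@mod_dvd (T + q1)); rewrite e1 -e2; congr (_ %% _); lia.
move/dvdn_leq; lia.
Qed.

Lemma block1 p c T : c < p -> \sum_(0 <= q < p) Rc p c (T + q) = 1.
Proof.
move=> cp; have p0 : 0 < p by lia.
apply/eqP; rewrite eqn_leq win_le1 //=.
set q0 := (c + (p - T %% p)) %% p.
have q0p : q0 < p by rewrite ltn_pmod.
rewrite (@big_cat_nat _ _ _ q0) ?(ltnW q0p) //= [X in _ + X]big_ltn //.
suff hq : Rc p c (T + q0) = 1 by rewrite hq; lia.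
rewrite /Rc /q0 modnDmr.
have hT := divn_eq T p; have hr : T %% p < p by rewrite ltn_pmod.
move: hT hr; set a := T %/ p; set r := T %% p => hT hr.
have -> : T + (c + (p - r)) = (a.+1) * p + c.
  rewrite mulSn hT; lia.
by rewrite modnMDl modn_small ?eqxx.
Qed.

Lemma blocks p c T n : c < p -> \sum_(0 <= q < n * p) Rc p c (T + q) = n.
Proof.
move=> cp; elim: n T => [|n IH] T; first by rewrite mul0n big_geq.
by rewrite mulSn sumS block1 // IH add1n.
Qed.

Lemma C1 m i T : 0 < m -> i < rho m ->
  mu m i <= \sum_(0 <= q < kk m) X m i (T + q) <= (mu m i).+1.
Proof.
move=> hm hi; have p0 := pr_gt0 hi; have bp := beta_lt hi.
rewrite (kk_eq m i) sumS.
have -> : \sum_(0 <= q < mu m i * pr m i) X m i (T + q) = mu m i by exact: blocks.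
have := win_le1 (beta m i) (T + mu m i * pr m i) p0 (ltnW bp).
rewrite /Rc /X. lia.
Qed.

Lemma C2 m i T : 0 < m -> i < rho m ->
  \sum_(0 <= q < kk m) Z m i (T + q) <= mu m i.
Proof.
move=> hm hi; have p0 := pr_gt0 hi; have bp := beta_lt hi.
have h1 := sumS (Z m i) 0 T (kk m).
have h2 := sumS (Z m i) 0 (kk m) T.
have h3 : \sum_(0 <= q < T) Z m i (0 + kk m + q) = 0.
  rewrite big_nat_cond big1 // => q _; rewrite /Z add0n.
  by rewrite ltnNge leq_addr andbF.
have h4 : \sum_(0 <= q < kk m) Z m i (0 + q) = mu m i.
  rewrite (eq_big_nat _ _ (F2 := fun q => X m i (0 + q))); last first.
    by move=> q /andP[_ hq]; rewrite /Z /X add0n hq andbT.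
  rewrite (kk_eq m i) sumS.
  have -> : \sum_(0 <= q < mu m i * pr m i) X m i (0 + q) = mu m i by exact: blocks.
  rewrite big_nat_cond big1 ?addn0 // => q /andP[/andP[_ hq] _].
  rewrite /X add0n modnMDl modn_small; last lia.
  by rewrite ltn_eqF.
rewrite add0n in h1. rewrite addnC in h2. lia.
Qed.

Lemma shiftH (G : nat -> nat) o K :
  \sum_(0 <= q < K) G (o.+1 + q) + G o = \sum_(0 <= q < K) G (o + q) + G (o + K).
Proof.
have h1 := sumS G o 1 K; have h2 := sumS G o K 1.
rewrite big_nat1 addn0 in h1; rewrite big_nat1 addn0 in h2.
rewrite addnC in h2. rewrite h2 in h1. rewrite -addn1. lia.
Qed.

Lemma sumS0 (f : nat -> nat) L1 L2 :
  \sum_(0 <= q < L1 + L2) f q =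
  \sum_(0 <= q < L1) f q + \sum_(0 <= q < L2) f (L1 + q).
Proof.
have := sumS f 0 L1 L2.
rewrite !(eq_bigr (fun q => f (0 + q)) (fun q _ => erefl)) /=.
have e : forall L, \sum_(0 <= q < L) f (0 + q) = \sum_(0 <= q < L) f q.
  by move=> L; apply: eq_bigr => q _; rewrite add0n.
by rewrite !e add0n.
Qed.

Lemma win_base (r K : nat) (F : nat -> nat -> nat) : 0 < r ->
  \sum_(0 <= N < r * K) F (N %% r) (N %/ r) =
  \sum_(i < r) \sum_(0 <= q < K) F i q.
Proof.
move=> r0; elim: K => [|K IH].
  by rewrite muln0 big_geq // big1 // => i _; rewrite big_geq.
rewrite mulnS addnC sumS0 IH.
rewrite (eq_big_nat _ _ (F1 := fun q => F ((r * K + q) %% r) ((r * K + q) %/ r))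
   (F2 := fun q => F q K)); last first.
  move=> q /andP[_ hq]; rewrite mulnC modnMDl divnMDl // modn_small // divn_small //.
  by rewrite addn0.
rewrite big_mkord -big_split /=; apply: eq_bigr => i _.
by rewrite big_nat_recr.
Qed.

Lemma win_decomp (r K A : nat) (F : nat -> nat -> nat) : 0 < r ->
  \sum_(A <= N < A + r * K) F (N %% r) (N %/ r) =
  \sum_(i < r) \sum_(0 <= q < K) F i (A %/ r + (i < A %% r) + q).
Proof.
move=> r0; case: (posnP K) => [->|K0].
  by rewrite muln0 addn0 big_geq // big1 // => i _; rewrite big_geq.
elim: A => [|A IH].
  rewrite add0n win_base // div0n mod0n; apply: eq_bigr => i _.
  by apply: eq_bigr => q _; rewrite add0n.
set g := fun N => F (N %% r) (N %/ r).
have rK0 : 0 < r * K by rewrite muln_gt0 r0.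
have L1 : \sum_(A <= N < A + r * K) g N = g A + \sum_(A.+1 <= N < A + r * K) g N.
  by rewrite big_ltn //; lia.
have L2 : \sum_(A.+1 <= N < A.+1 + r * K) g N =
   \sum_(A.+1 <= N < A + r * K) g N + g (A + r * K).
  by rewrite addSn big_nat_recr //; lia.
have gA : g (A + r * K) = F (A %% r) (A %/ r + K).
  by rewrite /g mulnC addnC modnMDl divnMDl // addnC.
set a := A %/ r; set s := A %% r.
have sr : s < r by rewrite ltn_pmod.
have hA : A = a * r + s by rewrite /a /s -divn_eq.
have offs : forall i, i < r -> i != s ->
    A.+1 %/ r + (i < A.+1 %% r) = a + (i < s).
  move=> i ir ne; case: (ltnP s.+1 r) => h.
    rewrite hA -addnS divnMDl // modnMDl divn_small // modn_small // addn0.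
    by congr (_ + _); rewrite ltnS leq_eqVlt (negbTE ne).
  have e : A.+1 = a.+1 * r by rewrite hA mulSn; lia.
  rewrite e mulnK // modnMl ltn0 addn0.
  have : i < s by lia.
  by move=> ->; rewrite addn1.
have offss : A.+1 %/ r + (s < A.+1 %% r) = a.+1.
  case: (ltnP s.+1 r) => h.
    rewrite hA -addnS divnMDl // modnMDl divn_small // modn_small // addn0 ltnSn.
    by rewrite addn1.
  have e : A.+1 = a.+1 * r by rewrite hA mulSn; lia.
  by rewrite e mulnK // modnMl ltn0 addn0.
have ltnn' : (s < s) = false by rewrite ltnn.
set H := fun i o => \sum_(0 <= q < K) F i (o + q).
have R1 : \sum_(i < r) \sum_(0 <= q < K) F i (A.+1 %/ r + (i < A.+1 %% r) + q)
   = H s a.+1 + \sum_(i < r | i != Ordinal sr) H i (a + (i < s)).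
  rewrite (bigD1 (Ordinal sr)) //= offss; congr (_ + _).
  apply: eq_bigr => i ne; rewrite /H offs //.
have R0 : \sum_(i < r) \sum_(0 <= q < K) F i (A %/ r + (i < A %% r) + q)
   = H s a + \sum_(i < r | i != Ordinal sr) H i (a + (i < s)).
  by rewrite (bigD1 (Ordinal sr)) //= -/a -/s ltnn' addn0.
have SH := shiftH (F s) a K.
rewrite R1; rewrite R0 in IH.
have gA0 : g A = F s a by [].
rewrite /H in IH R0 R1 *.
rewrite -/a -/s in gA.
rewrite /g /= in L1 L2 gA gA0.
rewrite L2; rewrite L1 in IH. lia.
Qed.

Lemma RB (r K : nat) (a g : nat -> int) : 0 < r ->
  (\sum_(1 <= f < (r * K).+1)
     (if ((r %| f) && (0 < f %/ r <= K))%N then a (f %/ r)%N else Posz 0) * g f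
   = \sum_(1 <= j < K.+1) a j * g (r * j))%R.
Proof.
move=> r0.
have ex : forall f, (if ((r %| f) && (0 < f %/ r <= K))%N then a (f %/ r)%N else Posz 0)
   = (\sum_(1 <= j < K.+1) (if f == r * j then a j else 0))%R.
  move=> f; case: ifP => h.
    case/andP: h => hd hr.
    rewrite (eq_bigr (fun j => if j == f %/ r then a j else 0)).
      by rewrite sum_if_eq //; lia.
    move=> j _; congr (if _ then _ else _).
    by rewrite -{1}(divnK hd) mulnC eqn_pmul2l // eq_sym.
  rewrite big_nat_cond big1 // => j /andP[/andP[l1 l2] _].
  case: eqP => // hj; move: h; rewrite hj dvdn_mulr // mulKn //; lia.
rewrite (eq_bigr (fun f => \sum_(1 <= j < K.+1) (if f == r * j then a j * g f else 0))%R);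
  last first.
  move=> f _; rewrite ex big_distrl; apply: eq_bigr => j _.
  by case: ifP => _; rewrite /= ?mul0r.
rewrite exchange_big; apply: eq_big_nat => j /andP[j1 j2].
rewrite (eq_bigr (fun f => if f == r * j then a j * g f else 0)%R) //.
rewrite sum_if_eq //; apply/andP; split.
  by rewrite muln_gt0 r0.
by rewrite ltnS leq_mul2l; apply/orP; right; lia.
Qed.

Lemma xinit_X m i t : 0 < m -> i < rho m -> t < kk m -> x_init m i t = X m i t.
Proof.
move=> hm hi ht; have p0 := pr_gt0 hi; have bp := beta_lt hi.
rewrite /x_init /X; congr nat_of_bool; apply/idP/idP.
  case/and3P => h1 h2 h3.
  have e : t = (t - beta m i) %/ pr m i * pr m i + beta m i by rewrite divnK // subnK.
  by rewrite e modnMDl modn_small.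
move/eqP => hX.
have e := divn_eq t (pr m i); rewrite hX in e.
have e2 : t - beta m i = t %/ pr m i * pr m i.
  by move: e; move: (t %/ pr m i * pr m i) => u; clear; lia.
rewrite e2 dvdn_mull // mulnK //.
have h1 : beta m i <= t by rewrite e leq_addl.
rewrite h1 /= -(ltn_pmul2r p0).
move: ht e; rewrite (kk_eq m i); move: (t %/ pr m i * pr m i) (mu m i * pr m i) => u v.
clear; lia.
Qed.

Lemma divmod_sub r N j : 0 < r -> r * j <= N ->
  (N - r * j) %% r = N %% r /\ (N - r * j) %/ r = N %/ r - j.
Proof.
move=> r0 h; split; first by rewrite mulnC mod_sub // mulnC.
have hj : j <= N %/ r by rewrite leq_divRL // mulnC.
have e := divn_eq N r.
have e2 : N - r * j = (N %/ r - j) * r + N %% r.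
  rewrite mulnBl mulnC. have : j * r <= N %/ r * r by rewrite leq_mul2r hj orbT.
  move: e; move: (N %/ r * r) (j * r) (N %% r) => u v w; clear; lia.
by rewrite e2 divnMDl // (divn_small (ltn_pmod N r0)) addn0.
Qed.

Lemma x_X m i t : 0 < m -> 2 <= rho m -> i < rho m -> x m i t = X m i t.
Proof.
move=> hm hr hi; elim/ltn_ind: t => t IH.
rewrite /x thr_eq; case: ltnP => ht; first exact: xinit_X.
rewrite -(K1 hm hr hi ht); congr (nat_of_bool (_ <= _)%R).
apply: eq_big_nat => j /andP[j1 j2].
by have := IH (t - j) ltac:(lia); rewrite /x => ->.
Qed.

Lemma y_X m N : 0 < m -> 2 <= rho m -> y m N = X m (N %% rho m) (1 + N %/ rho m).
Proof.
move=> hm hr; have r0 : 0 < rho m by lia.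
have ir : N %% rho m < rho m by rewrite ltn_pmod.
elim/ltn_ind: N ir => N IH ir.
rewrite /y thr_eq; case: ltnP => hN; first by rewrite x_X.
rewrite /hh /bw (@RB (rho m) (kk m) (abar m) (fun f => Posz (thr_seq (rho m * kk m) (bw m) (theta m)
   (fun n => x m (n %% rho m) (1 + n %/ rho m)) (N - f)))) //.
have hk : kk m <= N %/ rho m by rewrite leq_divRL // mulnC.
rewrite -(K1 (t := 1 + N %/ rho m) hm hr ir); last lia.
congr (nat_of_bool (_ <= _)%R).
apply: eq_big_nat => j /andP[j1 j2].
have hjN : rho m * j <= N.
  apply: leq_trans hN; rewrite /hh leq_mul2l; apply/orP; right; lia.
case: (divmod_sub r0 hjN) => e1 e2.
have := IH (N - rho m * j) ltac:(lia) ltac:(by rewrite ltn_pmod).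
rewrite /y /bw /hh => ->; rewrite e1 e2; congr (_ * Posz (X _ _ _))%R; lia.
Qed.

Definition Lc m d := \big[lcmn/1]_(i < d.+1) pr m i.

Definition Wf m d i t := if i <= d then Z m i t else X m i (t + Lc m d).

Lemma X_kk m i : X m i (kk m) = 1.
Proof. by rewrite /X /beta eqxx. Qed.

Lemma w_W m d N : 0 < m -> 2 <= rho m ->
  w m d N = Wf m d (N %% rho m) (1 + N %/ rho m).
Proof.
move=> hm hr; have r0 : 0 < rho m by lia.
have ir : N %% rho m < rho m by rewrite ltn_pmod.
elim/ltn_ind: N ir => N IH ir.
rewrite /w thr_eq; case: ltnP => hN.
  have hj : N %/ rho m < kk m by rewrite ltn_divLR // mulnC.
  rewrite /w_init /Wf /=; case: ifP => hd.
    case: ifP => hj2.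
      have k2 : 2 <= kk m by rewrite /kk; move: hm hr; clear; nia.
      rewrite x_X // /Z /X.
      have -> : (1 + N %/ rho m < kk m) = true by apply/idP; move: hj2 k2; clear; lia.
      by rewrite andbT.
    rewrite x_X // X_kk /Z; have -> : 1 + N %/ rho m = kk m by move: hj hj2; clear; lia.
    by rewrite ltnn andbF.
  rewrite y_X // /L1 -/(Lc m d) (mulnC (rho m) (Lc m d)) addnC modnMDl divnMDl //; congr (X _ _ _); clear; lia.
rewrite /hh /bw (@RB (rho m) (kk m) (abar m) (fun f => Posz (thr_seq (rho m * kk m) (bw m) (theta m)
   (w_init m d) (N - f)))) //.
have hk : kk m <= N %/ rho m by rewrite leq_divRL // mulnC.
have eqs : forall F : nat -> nat -> nat,
  (forall j, 1 <= j <= kk m -> forall N', N' = N - rho m * j ->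
     F j N' = Wf m d (N %% rho m) (1 + N %/ rho m - j)) ->
  (\sum_(1 <= j < (kk m).+1) abar m j * Posz (F j (N - rho m * j)%N) =
   \sum_(1 <= j < (kk m).+1) abar m j * Posz (Wf m d (N %% rho m) (1 + N %/ rho m - j)%N))%R.
  move=> F HF; apply: eq_big_nat => j /andP[j1 j2]; rewrite (HF j) //; lia.
rewrite (eqs (fun j N' => thr_seq (rho m * kk m) (bw m) (theta m) (w_init m d) N')); last first.
  move=> j hj N' ->.
  have hjN : rho m * j <= N.
    apply: leq_trans hN; rewrite /hh leq_mul2l; apply/orP; right; lia.
  case: (divmod_sub r0 hjN) => e1 e2.
  have := IH (N - rho m * j) ltac:(lia) ltac:(by rewrite ltn_pmod).
  rewrite /w /bw /hh => ->; rewrite e1 e2; congr (Wf _ _ _ _); lia.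
rewrite /Wf; case: ifP => hd.
  rewrite (K2 (t := 1 + N %/ rho m) hm hr ir); last lia.
  by rewrite /Z ltnNge (_ : kk m <= 1 + N %/ rho m) ?andbF //; lia.
rewrite -(K1 (t := 1 + N %/ rho m + Lc m d) hm hr ir); last lia.
congr (nat_of_bool (_ <= _)%R).
apply: eq_big_nat => j /andP[j1 j2]; congr (_ * Posz (X _ _ _))%R; lia.
Qed.

Lemma rev_win (g : nat -> nat) n H : H <= n ->
  \sum_(1 <= f < H.+1) g (n - f) = \sum_(n - H <= N < n) g N.
Proof.
elim: H => [|H IH] hH; first by rewrite !big_geq ?subn0.
rewrite big_nat_recr //= IH; last lia.
rewrite [RHS]big_ltn; last lia.
have -> : (n - H.+1).+1 = n - H by lia.
by rewrite addnC.
Qed.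

Lemma sum_ord_nat (F : nat -> nat) n : \sum_(i < n) F i = \sum_(0 <= i < n) F i.
Proof. by rewrite big_mkord. Qed.

Theorem lemma14 (m : nat) (hm : 0 < m) (hrho : 2 <= rho m) (n d : nat)
  (hn : hh m <= n) (hd : d <= rho m - 1) :
  (\sum_(i < rho m) mu m i <= \sum_(1 <= f < (hh m).+1) y m (n - f)
     <= rho m + \sum_(i < rho m) mu m i)%N /\
  (\sum_(d.+1 <= i < rho m) mu m i <= \sum_(1 <= f < (hh m).+1) w m d (n - f)
     <= rho m - d - 1 + \sum_(i < rho m) mu m i)%N.
Proof.
have r0 : 0 < rho m by lia.
set A := n - hh m.
have hA : A + rho m * kk m = n by exact: subnK hn.
split.
  rewrite rev_win // -/A -hA.
  rewrite (eq_bigr (fun N => X m (N %% rho m) (1 + N %/ rho m))); last first.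
    by move=> N _; rewrite y_X.
  have WD := @win_decomp (rho m) (kk m) A (fun i q => X m i (1 + q)) r0; simpl in WD; rewrite WD.
  have inner : forall i : 'I_(rho m),
    mu m i <= \sum_(0 <= q < kk m) X m i (1 + (A %/ rho m + (i < A %% rho m) + q))
    <= (mu m i).+1.
    move=> i.
    rewrite (eq_bigr (fun q => X m i (1 + (A %/ rho m + (i < A %% rho m)) + q))); last first.
      by move=> q _; rewrite !addnA.
    exact: C1.
  apply/andP; split.
    by apply: leq_sum => i _; case/andP: (inner i).
  apply: (@leq_trans (\sum_(i < rho m) (mu m i + 1))).
    by apply: leq_sum => i _; case/andP: (inner i); rewrite addn1.
  rewrite big_split /= (sum_ord_nat (fun _ => 1)) sum_nat_const_nat; lia.
rewrite rev_win // -/A -hA.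
rewrite (@eq_bigr _ _ _ _ _ _ (fun N => w m d N) (fun N => Wf m d (N %% rho m) (1 + N %/ rho m))); last first.
  by move=> N _; rewrite w_W.
have WD := @win_decomp (rho m) (kk m) A (fun i q => Wf m d i (1 + q)) r0; simpl in WD; rewrite WD.
have inner : forall i : 'I_(rho m),
  (if d < i then mu m i else 0) <=
    \sum_(0 <= q < kk m) Wf m d i (1 + (A %/ rho m + (i < A %% rho m) + q))
  <= mu m i + (d < i).
  move=> i; rewrite /Wf; case: leqP => hi.
    rewrite /= addn0.
    rewrite (eq_bigr (fun q => Z m i (1 + (A %/ rho m + (i < A %% rho m)) + q))).
      exact: C2.
    by move=> q _; rewrite !addnA.
  rewrite (eq_bigr (fun q => X m i (1 + (A %/ rho m + (i < A %% rho m)) + Lc m d + q))); last first.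
    by move=> q _; congr (X _ _ _); lia.
  by rewrite /= addn1; apply: C1.
have s1 : \sum_(i < rho m) (if d < i then mu m i else 0) = \sum_(d.+1 <= i < rho m) mu m i.
  rewrite (sum_ord_nat (fun i => if d < i then mu m i else 0)).
  rewrite (@big_cat_nat _ _ _ d.+1) //=; last lia.
  rewrite big_nat_cond big1 ?add0n; last first.
    by move=> i /andP[/andP[_ h] _]; rewrite ltnNge -ltnS h.
  by apply: eq_big_nat => i /andP[h _]; rewrite h.
have s2 : \sum_(i < rho m) (d < i) = rho m - d - 1.
  rewrite (sum_ord_nat (fun i => nat_of_bool (d < i))).
  rewrite (@big_cat_nat _ _ _ d.+1) //=; last lia.
  rewrite big_nat_cond big1 ?add0n; last first.
    by move=> i /andP[/andP[_ h] _]; rewrite ltnNge -ltnS h.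
  rewrite (eq_big_nat _ _ (F2 := fun _ => 1)); last by move=> i /andP[h _]; rewrite h.
  rewrite sum_nat_const_nat; lia.
apply/andP; split.
  rewrite -s1; apply: leq_sum => i _; by case/andP: (inner i).
apply: (@leq_trans (\sum_(i < rho m) (mu m i + (d < i)))).
  by apply: leq_sum => i _; case/andP: (inner i).
rewrite big_split /= s2; lia.
Qed.
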